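(* Consider the recursive algorithm $\mathrm{DST}(I,\widetilde{\mathrm{opt}})$ described in the context, applied to a planar \textsc{Directed Steiner Tree} instance $I=(G=(V,E),c,r,X)$ with positive integer edge costs and an estimate $\widetilde{\mathrm{opt}}$. Let $\ell$ and $o$ be non-negative integers with $|X|\le 2^{\ell}$ and $\widetilde{\mathrm{opt}}\le 2^{o}$. If $\widetilde{\mathrm{opt}}\ge \mathrm{opt}$, where $\mathrm{opt}$ is the optimal value of $I$, then $\mathrm{DST}(I,\widetilde{\mathrm{opt}})$ returns a feasible solution of cost at most $(6\ell+1)\cdot\mathrm{opt}$. Furthermore, the total number of recursive calls made by $\mathrm{DST}(I,\widetilde{\mathrm{opt}})$ and its subsequent recursive calls is at most $|X|\cdot 2^{2\ell+o}$.
   Context: \textsc{Directed Steiner Tree}: digraph $G=(V,E)$ (parallel edges allowed, planar underlying undirected graph) with edge costs $c_e$ (here positive integers), root $r$, terminals $X\subseteq V\setminus\{r\}$; a feasible solution is $F\subseteq E$ containing a directed $r$–$t$ path for each $t\in X$, of cost $\sum_{e\in F}c_e$; $\mathrm{opt}$ is the minimum cost. $d(u,v)$ is the shortest-path distance. Induced subinstances: for a partial arborescence $T$ rooted at $r$ (a directed tree containing $r$ oriented away from $r$) with $C_1,\dots,C_h$ the weakly connected components of $G\setminus T$ (delete vertices of $T$ and incident edges), contract $T$ into $r$ to get $G_{\mathrm{contract}}$, and set $I_{C_i}=(G_{\mathrm{contract}}[C_i\cup\{r\}],c,r,C_i\cap X)$, edges inheriting costs from the edges of $G$ they come from. Algorithm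 $\mathrm{DST}(I,\widetilde{\mathrm{opt}})$: (1) If $\widetilde{\mathrm{opt}}<1$ or $d(r,t)>\widetilde{\mathrm{opt}}$ for some $t\in X$, return infeasible. (2) Else if $|X|=1$, return a shortest directed path from $r$ to the terminal. (3) Otherwise: let $\mathcal F_1=\mathrm{DST}(I,\widetilde{\mathrm{opt}}/2)$ (cost $\infty$ if infeasible). Remove all vertices $v$ with $d(r,v)>\widetilde{\mathrm{opt}}$. Giving each terminal weight $1$ and every other vertex weight $0$, compute (by the planar shortest-path separator) a partial arborescence $T$ that is the union of up to three shortest directed paths starting at $r$ such that each weakly connected component $C_1,\dots,C_h$ of $G\setminus T$ contains at most $|X|/2$ terminals. Let $\mathcal F'_i=\mathrm{DST}(I_{C_i},\widetilde{\mathrm{opt}})$ for each $i$, and $\mathcal F_2$ be the edges of $G$ corresponding to $E(T)\cup\bigcup_i\mathcal F'_i$ (cost $\infty$ if some $\mathcal F'_i$ is infeasible). If both costs are $\infty$ return infeasible; else return the cheaper of $\mathcal F_1,\mathcal F_2$. *)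

(* Defs.v *)
From HB Require Import structures.
From mathcomp Require Import all_boot all_order all_algebra.
Set Implicit Arguments. Unset Strict Implicit. Unset Printing Implicit Defensive.
Import Order.TTheory GRing.Theory Num.Theory.

Section DSTDefs.
Variables (V E : finType) (c : E -> nat).

(* An instance: vertex set, edge set, current endpoint maps (contraction
   re-targets endpoints but keeps edge identities, so every edge of a
   subinstance "corresponds" to the edge of G with the same name), root,
   terminals. *)
Record inst := Inst {
  iV : {set V}; iE : {set E};
  itl : E -> V; ihd : E -> V;
  iroot : V; iterm : {set V} }.

Definition cost (F : {set E}) : nat := \sum_(e in F) c e.
Definition pcost (p : seq E) : nat := \sum_(e <- p) c e.

Fixpoint is_walk (tl hd : E -> V) (u : V) (p : seq E) (v : V) : bool :=
  match p with
  | [::] => u == v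
  | e :: p' => (tl e == u) && is_walk tl hd (hd e) p' v
  end.

Definition dpath (I : inst) (F : {set E}) (p : seq E) (u v : V) : bool :=
  [&& is_walk (itl I) (ihd I) u p v,
      all (fun e => e \in F :&: iE I) p &
      uniq (u :: map (ihd I) p)].

Definition feasible (I : inst) (F : {set E}) : Prop :=
  F \subset iE I /\
  forall t, t \in iterm I -> exists p, dpath I F p (iroot I) t.

Definition is_opt (I : inst) (k : nat) : Prop :=
  (exists F, feasible I F /\ cost F = k) /\
  forall F, feasible I F -> k <= cost F.

(* d(u,v) <= x  (so  d(u,v) > x  is  ~ dist_le, including d = infinity) *)
Definition dist_le (I : inst) (u v : V) (x : rat) : Prop :=
  exists p, dpath I (iE I) p u v /\ ((pcost p)%:R <= x)%R.

Definition shortest (I : inst) (p : seq E) (u v : V) : Prop :=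
  dpath I (iE I) p u v /\
  forall q, dpath I (iE I) q u v -> pcost p <= pcost q.

Definition restrict (I : inst) (W : {set V}) : inst :=
  Inst W [set e in iE I | (itl I e \in W) && (ihd I e \in W)]
       (itl I) (ihd I) (iroot I) (iterm I).

Definition part_arb (I : inst) (VT : {set V}) (ET : {set E}) : Prop :=
  [/\ [&& ET \subset iE I, VT \subset iV I & iroot I \in VT],
      (forall e, e \in ET -> (itl I e \in VT) && (ihd I e \in VT)),
      (forall e, e \in ET -> ihd I e != iroot I),
      (forall v, v \in VT -> v != iroot I ->
        #|[set e in ET | ihd I e == v]| = 1) &
      (forall v, v \in VT -> exists p, dpath I ET p (iroot I) v)].

Definition sep_tree (I : inst) (VT : {set V}) (ET : {set E}) : Prop :=
  part_arb I VT ET /\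
  exists p1 p2 p3,
    (exists v, shortest I p1 (iroot I) v) /\
    (exists v, shortest I p2 (iroot I) v) /\
    (exists v, shortest I p3 (iroot I) v) /\
    ET = [set e in p1 ++ p2 ++ p3] /\
    VT = iroot I |: [set v in map (ihd I) (p1 ++ p2 ++ p3)].

Definition wadj (I : inst) (S : {set V}) : rel V := fun u v =>
  [exists e, [&& e \in iE I, itl I e \in S, ihd I e \in S &
     ((itl I e == u) && (ihd I e == v)) || ((itl I e == v) && (ihd I e == u))]].

Definition wcomp (I : inst) (S : {set V}) (u : V) : {set V} :=
  [set v in S | (u \in S) && connect (wadj I S) u v].

Definition rest (I : inst) (VT : {set V}) : {set V} := iV I :\: VT.

Definition balanced (I : inst) (VT : {set V}) : Prop :=
  forall u, u \in rest I VT ->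
    (#|wcomp I (rest I VT) u :&: iterm I|).*2 <= #|iterm I|.

Definition comps (I : inst) (VT : {set V}) : {set {set V}} :=
  [set wcomp I (rest I VT) u | u in rest I VT :&: iterm I].

(* induced subinstance I_C: contract T into r, take G_contract[C + r] *)
Definition subinst (I : inst) (VT : {set V}) (C : {set V}) : inst :=
  let r := iroot I in
  let f := fun v => if v \in VT then r else v in
  Inst (r |: C)
       [set e in iE I | [&& f (itl I e) \in r |: C, f (ihd I e) \in r |: C &
                            ~~ ((itl I e \in VT) && (ihd I e \in VT))]]
       (fun e => f (itl I e)) (fun e => f (ihd I e)) r (C :&: iterm I).

Definition combine (ET : {set E}) (cs : {set {set V}})
    (Fs : {set V} -> option {set E}) : option {set E} :=
  if [forall C in cs, Fs C != None]
  then Some (ET :|: \bigcup_(C in cs) odflt set0 (Fs C))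
  else None.

(* R is the cheaper of R1, R2 (None = infeasible = cost infinity) *)
Definition cheaper (R1 R2 R : option {set E}) : Prop :=
  match R1, R2 with
  | None, None => R = None
  | Some F1, None => R = Some F1
  | None, Some F2 => R = Some F2
  | Some F1, Some F2 =>
      (R = Some F1 /\ cost F1 <= cost F2) \/ (R = Some F2 /\ cost F2 <= cost F1)
  end.

(* DST I x R n : some execution of DST(I, x) returns R (None = infeasible)
   and makes n calls in total (this call included). *)
Inductive DST : inst -> rat -> option {set E} -> nat -> Prop :=
| DST_infeas I x :
    ((x < 1)%R \/ exists t, t \in iterm I /\ ~ dist_le I (iroot I) t x) ->
    DST I x None 1
| DST_single I x t p :
    (1 <= x)%R ->
    (forall t', t' \in iterm I -> dist_le I (iroot I) t' x) ->
    iterm I = [set t] ->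
    shortest I p (iroot I) t ->
    DST I x (Some [set e in p]) 1
| DST_rec I x R1 n1 (W VT : {set V}) (ET : {set E})
    (Fs : {set V} -> option {set E}) (ns : {set V} -> nat) R :
    (1 <= x)%R ->
    (forall t', t' \in iterm I -> dist_le I (iroot I) t' x) ->
    #|iterm I| != 1 ->
    DST I (x / 2%:R)%R R1 n1 ->
    (forall v, v \in W <-> (v \in iV I /\ dist_le I (iroot I) v x)) ->
    sep_tree (restrict I W) VT ET ->
    balanced (restrict I W) VT ->
    (forall C, C \in comps (restrict I W) VT ->
       DST (subinst (restrict I W) VT C) x (Fs C) (ns C)) ->
    cheaper R1 (combine ET (comps (restrict I W) VT) Fs) R ->
    DST I x R (1 + n1 + \sum_(C in comps (restrict I W) VT) ns C).

End DSTDefs.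

(* Main.v *)
Require Import Defs.
From mathcomp Require Import all_boot all_order all_algebra.
From mathcomp Require Import zify lra.
Set Implicit Arguments. Unset Strict Implicit. Unset Printing Implicit Defensive.
Import Order.TTheory GRing.Theory Num.Theory.

Section Gen.
Variables (V E : finType) (c : E -> nat).

Lemma cost_sub (A B : {set E}) : A \subset B -> cost c A <= cost c B.
Proof.
move/subsetP=> AB; rewrite /cost [X in X <= _]big_mkcond [X in _ <= X]big_mkcond.
apply: leq_sum => e _; case: ifP => // /AB ->; done.
Qed.

Lemma cost_setU (A B : {set E}) : cost c (A :|: B) <= cost c A + cost c B.
Proof.
rewrite /cost big_mkcond (big_mkcond (fun e => e \in A)) (big_mkcond (fun e => e \in B)) -big_split /=; apply: leq_sum => e _.
rewrite inE; case: (e \in A); case: (e \in B) => //=; lia.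
Qed.

Lemma cost_bigcup (I : finType) (P : {set I}) (G : I -> {set E}) :
  cost c (\bigcup_(i in P) G i) <= \sum_(i in P) cost c (G i).
Proof.
apply: (big_rec2 (fun A n => cost c A <= n)); first by rewrite /cost big_set0.
move=> i A n _ h; apply: leq_trans (cost_setU _ _) _; exact: leq_add.
Qed.

Lemma cost_set_le (s : seq E) : cost c [set e in s] <= pcost c s.
Proof.
elim: s => [|e s IH].
  have -> : [set x in [::]] = set0 :> {set E} by apply/setP => x; rewrite !inE.
  by rewrite /cost big_set0.
have -> : [set x in e :: s] = [set e] :|: [set x in s].
  by apply/setP => x; rewrite !inE.
apply: leq_trans (cost_setU _ _) _; rewrite /pcost big_cons -/(pcost c s).
by rewrite /cost big_set1 leq_add2l.
Qed.

Lemma pcost_uniq_le (s : seq E) (F : {set E}) :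
  uniq s -> all (fun e => e \in F) s -> pcost c s <= cost c F.
Proof.
move=> us /allP aF; rewrite /pcost big_uniq //.
have -> : \sum_(i in s) c i = cost c [set e in s].
  by rewrite /cost; apply: eq_bigl => e; rewrite inE.
apply: cost_sub; apply/subsetP => e; rewrite inE; exact: aF.
Qed.

Lemma pcost_cat (s1 s2 : seq E) : pcost c (s1 ++ s2) = pcost c s1 + pcost c s2.
Proof. by rewrite /pcost big_cat. Qed.

Lemma sum_disj (T U : finType) (P : {set {set U}}) (g : T -> U) (w : T -> nat)
  (A : {set T}) :
  (forall C1 C2 u, C1 \in P -> C2 \in P -> u \in C1 -> u \in C2 -> C1 = C2) ->
  \sum_(C in P) \sum_(x in A | g x \in C) w x <= \sum_(x in A) w x.
Proof.
move=> H; rewrite (exchange_big_dep (fun x => x \in A)) /=; last first.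
  by move=> C x _ /andP[].
apply: leq_sum => x xA.
have -> : \sum_(C in P | (x \in A) && (g x \in C)) w x =
          \sum_(C in [set C in P | g x \in C]) w x.
  by apply: eq_bigl => C; rewrite !inE xA.
rewrite sum_nat_const -[X in _ <= X]mul1n leq_mul2r; apply/orP; right.
apply/card_le1P => C1; rewrite inE => /andP[h1 h2] C2; rewrite !inE.
apply/andP/eqP => [[h3 h4]|->]; last by [].
exact: (H _ _ _ h3 h1 h4 h2).
Qed.

Lemma is_walk_cat (tl hd : E -> V) u p1 p2 v :
  is_walk tl hd u (p1 ++ p2) v =
  is_walk tl hd u p1 (last u (map hd p1)) && is_walk tl hd (last u (map hd p1)) p2 v.
Proof.
elim: p1 u => [|e p1 IH] u /=; first by rewrite eqxx.
by rewrite IH andbA.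
Qed.

Lemma dpath_prefix (I : inst V E) (F : {set E}) p1 p2 u v :
  dpath I F (p1 ++ p2) u v -> dpath I F p1 u (last u (map (ihd I) p1)).
Proof.
rewrite /dpath is_walk_cat all_cat map_cat -cat_cons cat_uniq.
by case/and3P => /andP[-> _] /andP[-> _] /and3P[-> _ _].
Qed.

Lemma dpath_mono (I : inst V E) (F G : {set E}) p u v :
  F \subset G -> dpath I F p u v -> dpath I G p u v.
Proof.
move/subsetP=> FG /and3P[h1 h2 h3]; apply/and3P; split => //.
apply/allP => e /(allP h2); rewrite !inE => /andP[/FG -> ->]; done.
Qed.


Lemma walk_last (tl hd : E -> V) u p v :
  is_walk tl hd u p v -> last u (map hd p) = v.
Proof. by elim: p u => [|e p IH] u /=; [move/eqP | case/andP => _ /IH]. Qed.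

Lemma walk_lift (tl hd : E -> V) (VT : {set V}) r :
  r \in VT ->
  forall q w t, w \notin VT ->
  all (fun e => (if hd e \in VT then r else hd e) != r) q ->
  is_walk (fun e => if tl e \in VT then r else tl e)
          (fun e => if hd e \in VT then r else hd e) w q t ->
  is_walk tl hd w q t.
Proof.
move=> rVT; elim=> [|e q IH] w t wVT //= /andP[he hq] /andP[/eqP htl hw].
have tlw : tl e = w.
  by move: htl; case: ifP => // _ hr; move: wVT; rewrite -hr rVT.
have hdn : hd e \notin VT by move: he; case: ifP => //; rewrite eqxx.
rewrite tlw eqxx /=; apply: IH => //; by move: hw; rewrite (negbTE hdn).
Qed.

Lemma dpath_restrict (I : inst V E) (W : {set V}) (G : {set E}) p u v :
  dpath (restrict I W) G p u v -> dpath I G p u v.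
Proof.
case/and3P => h1 h2 h3; apply/and3P; split => //.
apply/allP => e /(allP h2); rewrite !inE => /and3P[-> -> _]; done.
Qed.

Lemma wadj_sym (I : inst V E) (S : {set V}) : symmetric (wadj I S).
Proof.
move=> u v; apply/existsP/existsP => -[e he]; exists e; move: he;
  by case/and4P => -> -> -> /=; rewrite orbC.
Qed.

Lemma wcompP (I : inst V E) (S : {set V}) u v :
  (v \in wcomp I S u) = [&& v \in S, u \in S & connect (wadj I S) u v].
Proof. by rewrite inE. Qed.

Lemma wcomp_self (I : inst V E) (S : {set V}) u : u \in S -> u \in wcomp I S u.
Proof. by move=> uS; rewrite wcompP uS connect0. Qed.

Lemma wcomp_eq (I : inst V E) (S : {set V}) u v :
  v \in wcomp I S u -> wcomp I S v = wcomp I S u.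
Proof.
rewrite wcompP => /and3P[vS uS cuv]; apply/setP => w; rewrite !wcompP vS uS /=.
have sym := sym_connect_sym (wadj_sym I S).
apply/andP/andP => -[wS h]; split => //.
  exact: connect_trans cuv h.
by apply: connect_trans _ h; rewrite sym.
Qed.

Lemma comps_disj (I : inst V E) (VT : {set V}) (C1 C2 : {set V}) w :
  C1 \in comps I VT -> C2 \in comps I VT -> w \in C1 -> w \in C2 -> C1 = C2.
Proof.
move=> /imsetP[u1 _ ->] /imsetP[u2 _ ->] /wcomp_eq <- /wcomp_eq <-; done.
Qed.

Lemma comb_feas (I : inst V E) (x : rat) (W VT : {set V}) (ET : {set E}) (Fs : {set V} -> option {set E}) (F : {set E}) :
  iterm I \subset iV I ->
  (forall t, t \in iterm I -> dist_le c I (iroot I) t x) ->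
  (forall v, v \in W <-> (v \in iV I /\ dist_le c I (iroot I) v x)) ->
  part_arb (restrict I W) VT ET ->
  (forall C, C \in comps (restrict I W) VT -> forall F, Fs C = Some F ->
      feasible (subinst (restrict I W) VT C) F) ->
  combine ET (comps (restrict I W) VT) Fs = Some F -> feasible I F.
Proof.
move=> XV hd hW [/and3P[ETE VTV rVT] hET _ _ hpath] hsub.
rewrite /combine; case: ifP => // /forallP hall [<-].
have ETI : ET \subset iE I.
  apply: subset_trans ETE _; apply/subsetP => e; rewrite inE => /andP[]; done.
split.
  rewrite subUset ETI /=; apply/bigcupsP => C hC.
  case hF: (Fs C) => [FC|] /=; last exact: sub0set.
  have [h _] := hsub C hC FC hF.
  apply: subset_trans h _; apply/subsetP => e; rewrite /= !inE.
  by case/andP => /andP[].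
move=> t tX.
have subF : ET \subset ET :|: \bigcup_(C in comps (restrict I W) VT) odflt set0 (Fs C).
  exact: subsetUl.
case: (boolP (t \in VT)) => tVT.
  have [p hp] := hpath t tVT; exists p; apply: dpath_restrict (dpath_mono subF hp).
have tW : t \in W by apply/hW; split; [exact: (subsetP XV) | exact: hd].
set J := restrict I W.
have trest : t \in rest J VT by rewrite /rest inE tVT.
set C := wcomp J (rest J VT) t.
have hC : C \in comps J VT by apply/imsetP; exists t => //; rewrite inE trest.
have tC : t \in C by exact: wcomp_self.
move/(_ C): hall; rewrite hC /=; case hF: (Fs C) => [FC|] //= _.
have [_ hFC] := hsub C hC FC hF.
have [q hq] : exists q, dpath (subinst J VT C) FC q (iroot I) t.
  by apply: hFC; rewrite /= inE tC.
have CVT : forall v, v \in C -> v \notin VT.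
  by move=> v; rewrite wcompP /rest inE => /andP[/andP[]].
case: q hq => [|e q].
  by rewrite /dpath /= => /andP[/eqP ert _]; move: tVT; rewrite -ert rVT.
case/and3P => /andP[/eqP htl hw] hall2 huniq; rewrite /= in htl hw.
set f := fun v => if v \in VT then iroot I else v.
have tle : itl I e \in VT.
  case: (boolP (itl I e \in VT)) => // hn; move: htl; rewrite (negbTE hn) => h.
  by move: hn; rewrite h rVT.
have [p0 hp0] := hpath _ tle.
have hdr : all (fun e => (if ihd I e \in VT then iroot I else ihd I e) != iroot I) (e :: q).
  apply/allP => e' he'; move: huniq => /andP[hn _].
  apply: contraNneq hn => h; rewrite -{1}h; move: he'; rewrite inE => /orP[/eqP->|h']; first by rewrite mem_head.
  by rewrite inE (map_f _ h') orbT.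
have hde : ihd I e \notin VT.
  by move: hdr => /= /andP[]; case: ifP => //; rewrite eqxx.
have mapq : map (fun e => if ihd I e \in VT then iroot I else ihd I e) (e :: q) = map (ihd I) (e :: q).
  apply/eq_in_map => e' he'; move/allP: hdr => /(_ e' he').
  by case: ifP => //; rewrite eqxx.
exists (p0 ++ e :: q).
case/and3P: hp0 => w0 a0 u0.
apply/and3P; split.
- rewrite is_walk_cat (walk_last w0) w0 /= eqxx /=.
  apply: (walk_lift rVT) => //; first by move: hdr => /= /andP[].
  by move: hw; rewrite /= (negbTE hde).
- rewrite all_cat; apply/andP; split.
    apply/allP => e' /(allP a0); rewrite !inE => /andP[-> /andP[]] //.
  apply/allP => e' /(allP hall2); rewrite !inE => /andP[h1 /andP[/and3P[h2 _ _] _]].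
  rewrite h2 andbT; apply/orP; right; apply/bigcupP; exists C => //; rewrite hF //.
- rewrite map_cat -cat_cons cat_uniq.
  have hu2 : uniq (map (ihd I) (e :: q)).
    by move: huniq => /andP[_] h; rewrite -mapq; exact: h.
  apply/and3P; split; [exact: u0 | | exact: hu2].
  apply/hasPn => v /mapP[e' he' ->]; rewrite /= inE negb_or.
  have hv : ihd I e' \notin VT.
    move/allP: hdr => /(_ e' he'); by case: ifP => //; rewrite eqxx.
  apply/andP; split; first by apply: contraNneq hv => ->.
  apply: contra hv => /mapP[e'' he'' ->].
  have := allP a0 e'' he''; rewrite inE => /andP[/hET /andP[_ h] _]; exact: h.
Qed.


Lemma DST_feas (I : inst V E) x R n : DST c I x R n ->
  iterm I \subset iV I -> forall F, R = Some F -> feasible I F.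
Proof.
elim => {I x R n}.
- by [].
- move=> I x t p _ _ hX [hp _] _ F [<-]; split.
    apply/subsetP => e; rewrite inE => /(allP (proj1 (andP (proj2 (andP hp))))).
    by rewrite inE => /andP[].
  move=> t'; rewrite hX inE => /eqP ->; exists p.
  case/and3P: hp => h1 h2 h3; apply/and3P; split => //.
  apply/allP => e he; move: (allP h2 e he); rewrite !inE he /=. by case/andP.
- move=> I x R1 n1 W VT ET Fs ns R h1 hd hne _ IH1 hW hsep hbal _ IHs hch XV F hR.
  have hsub : forall C, C \in comps (restrict I W) VT -> forall F, Fs C = Some F ->
      feasible (subinst (restrict I W) VT C) F.
    move=> C hC F' hF'; apply: (IHs C hC) hF'.
    by apply/subsetP => v; rewrite /= !inE => /andP[-> _]; rewrite orbT.
  move: hch; rewrite hR.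
  case hc: (combine ET (comps (restrict I W) VT) Fs) => [F2|];
    case: R1 IH1 => [F1|] IH1 /=.
  + case=> -[[->] _]; [exact: (IH1 XV) | exact: (comb_feas XV hd hW (proj1 hsep) hsub hc)].
  + case=> ->; exact: (comb_feas XV hd hW (proj1 hsep) hsub hc).
  + case=> ->; exact: IH1.
  + by [].
Qed.


Lemma DST_lt1 (I : inst V E) y R n : DST c I y R n -> (y < 1)%R -> n = 1.
Proof.
intros h hy; destruct h as [| I0 x t p h1 | I0 x R1 n1 W VT ET Fs ns R0 h1]; [reflexivity | exfalso; lra | exfalso; lra].
Qed.

Lemma comps_term (I : inst V E) (VT : {set V}) C :
  C \in comps I VT -> C :&: iterm I != set0.
Proof.
case/imsetP => u; rewrite inE => /andP[ur uX] ->.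
by apply/set0Pn; exists u; rewrite inE uX andbT wcomp_self.
Qed.

Lemma sum_comps_card (I : inst V E) (VT : {set V}) :
  \sum_(C in comps I VT) #|C :&: iterm I| <= #|iterm I|.
Proof.
have := @sum_disj V V (comps I VT) id (fun _ => 1) (iterm I).
rewrite sum1_card => h; apply: leq_trans (h _); last first.
  by move=> C1 C2 u h1 h2 h3 h4; exact: comps_disj h1 h2 h3 h4.
apply: leq_sum => C _; rewrite -sum1_card; apply/eq_leq/eq_bigl => v.
by rewrite !inE andbC.
Qed.

Lemma DST_count (I : inst V E) x R n : DST c I x R n ->
  iterm I != set0 -> forall l o, #|iterm I| <= 2 ^ l -> (x <= 2%:R ^+ o)%R ->
  n <= #|iterm I| * 2 ^ (2 * l + o).
Proof.
elim => {I x R n}.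
- move=> I x _ hne l o _ _; rewrite muln_gt0 expn_gt0 /= andbT card_gt0 //.
- move=> I x t p _ _ hX _ hne l o _ _; rewrite muln_gt0 expn_gt0 /= andbT card_gt0 //.
- move=> I x R1 n1 W VT ET Fs ns R h1 hd hne1 hR1 IH1 hW hsep hbal _ IHs hch hne l o hl hx.
  set X := iterm I.
  have X2 : 2 <= #|X|.
    by move: hne1 hne; rewrite -card_gt0 /X; case: #|iterm I| => [|[|k]].
  case: l hl => [|l'] hl; first by move: (leq_trans X2 hl).
  set P := 2 ^ (2 * l' + o).
  have hsum : \sum_(C in comps (restrict I W) VT) ns C <= #|X| * P.
    apply: (@leq_trans (\sum_(C in comps (restrict I W) VT) #|C :&: X| * P)).
      apply: leq_sum => C hC; apply: (IHs C hC) => //.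
        exact: (comps_term hC).
      have [u hu ->] := imsetP hC.
      move: hu; rewrite inE => /andP[hur _]; have := hbal u hur.
      rewrite /= -mul2n; move: hl; rewrite expnS /=; lia.
    rewrite -big_distrl /= leq_mul2r; apply/orP; right; exact: sum_comps_card.
  have hPX : 2 <= #|X| * P.
    by apply: leq_trans X2 _; rewrite leq_pmulr // expn_gt0.
  case: o hx @P hsum hPX => [|o'] hx P hsum hPX.
    have hn1 : n1 = 1.
      have := DST_lt1 hR1; apply; rewrite expr0 in hx; lra.
    have -> : 2 * l'.+1 + 0 = 2 + (2 * l' + 0) by lia.
    rewrite expnD -/P hn1; move: hsum hPX; lia.
  have hn1 := IH1 hne l'.+1 o' hl (ltac:(rewrite exprS in hx; lra)).
  move: hn1.
  have -> : 2 * l'.+1 + o' = 1 + (2 * l' + o'.+1) by lia.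
  have -> : 2 * l'.+1 + o'.+1 = 2 + (2 * l' + o'.+1) by lia.
  rewrite [2 ^ (1 + _)]expnD [2 ^ (2 + _)]expnD -/P -/X mulnCA [_ * (2 ^ 2 * _)]mulnCA; move: hsum hPX; set a := #|X| * P; lia.
Qed.


Lemma dpath_iE (I : inst V E) (G : {set E}) p u v :
  dpath I G p u v -> dpath I (iE I) p u v.
Proof.
case/and3P => h1 h2 h3; apply/and3P; split => //.
by apply/allP => e /(allP h2); rewrite !inE => /andP[_ ->].
Qed.

Lemma dpath_uniq (I : inst V E) (G : {set E}) p u v :
  dpath I G p u v -> uniq p.
Proof. by case/and3P => _ _ /andP[_ /map_uniq]. Qed.

Lemma dpath_pcost (I : inst V E) (G : {set E}) p u v :
  dpath I G p u v -> pcost c p <= cost c G.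
Proof.
move=> hp; apply: pcost_uniq_le (dpath_uniq hp) _.
by case/and3P: hp => _ /allP h _; apply/allP => e /h; rewrite inE => /andP[].
Qed.

Lemma split_walk (tl hd : E -> V) (VT : {set V}) p u t :
  is_walk tl hd u p t -> t \notin VT ->
  all (fun e => hd e \notin VT) p \/
  exists p1 e p2, [/\ p = p1 ++ e :: p2, tl e \in VT & all (fun e => hd e \notin VT) (e :: p2)].
Proof.
elim: p u => [|e p IH] u /=; first by move=> _ _; left.
case/andP => /eqP htl hw tVT; case: (IH _ hw tVT) => [hall|[p1 [e' [p2 [-> h1 h2]]]]].
  case: (boolP (hd e \in VT)) => he; last by left; apply/andP.
  right; clear IH; case: p hw hall => [|e' p2] hw hall.
    by move: hw => /= /eqP ht; move: tVT; rewrite -ht he.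
  exists [:: e], e', p2; split => //; by case/andP: hw => /eqP ->.
by right; exists (e :: p1), e', p2.
Qed.

Lemma sym_conn (I : inst V E) (S : {set V}) u v :
  connect (wadj I S) u v = connect (wadj I S) v u.
Proof. exact: (sym_connect_sym (wadj_sym I S)). Qed.

Lemma conn_walk (J : inst V E) (S : {set V}) p w t :
  is_walk (itl J) (ihd J) w p t -> w \in S -> all (fun e => e \in iE J) p ->
  all (fun e => ihd J e \in S) p ->
  connect (wadj J S) w t /\ all (fun e => connect (wadj J S) (ihd J e) t) p.
Proof.
elim: p w => [|e p IH] w /=; first by move=> /eqP -> _ _ _; rewrite connect0.
case/andP => /eqP htl hw wS /andP[eJ aJ] /andP[hS aS].
have [h1 h2] := IH _ hw hS aJ aS; split; last by rewrite h1 h2.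
apply: connect_trans h1; apply: connect1; apply/existsP; exists e.
by rewrite eJ htl wS hS !eqxx.
Qed.

Lemma in_wcomp (J : inst V E) (S : {set V}) u t h :
  t \in wcomp J S u -> h \in S -> connect (wadj J S) h t -> h \in wcomp J S u.
Proof.
rewrite !wcompP => /and3P[tS uS cut] hS cht; rewrite hS uS /=.
by apply: connect_trans cut _; rewrite sym_conn.
Qed.


Definition edgesInV (I : inst V E) :=
  forall e, e \in iE I -> (itl I e \in iV I) && (ihd I e \in iV I).

Lemma to_restrict (I : inst V E) (W : {set V}) (x : rat) (G : {set E}) q v :
  edgesInV I ->
  (forall w, w \in W <-> (w \in iV I /\ dist_le c I (iroot I) w x)) ->
  dpath I G q (iroot I) v -> ((pcost c q)%:R <= x)%R ->
  dpath (restrict I W) G q (iroot I) v.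
Proof.
move=> hE hW hq hx.
have key : forall q1 e q2, q = q1 ++ e :: q2 -> (itl I e \in W) && (ihd I e \in W).
  move=> q1 e q2 hq12.
  have eI : e \in iE I.
    case/and3P: hq => _ /allP h _; have := h e; rewrite hq12 mem_cat mem_head orbT.
    by move=> /(_ isT); rewrite inE => /andP[].
  have /andP[tV hV] := hE e eI.
  have hc1 : ((pcost c q1)%:R <= x)%R.
    apply: le_trans hx; rewrite ler_nat hq12 pcost_cat; exact: leq_addr.
  have hc2 : ((pcost c (q1 ++ [:: e]))%:R <= x)%R.
    apply: le_trans hx; rewrite ler_nat hq12.
    have -> : q1 ++ e :: q2 = (q1 ++ [:: e]) ++ q2 by rewrite -catA.
    rewrite [X in _ <= X]pcost_cat; exact: leq_addr.
  apply/andP; split; apply/hW; split => //.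
  - exists q1; split => //.
    have hq' := hq; rewrite hq12 in hq'.
    have := dpath_iE (dpath_prefix hq').
    case/and3P: hq' => hw _ _; move: hw; rewrite is_walk_cat => /andP[_] /= /andP[/eqP <- _].
    done.
  - exists (q1 ++ [:: e]); split => //.
    have hq' := hq; rewrite hq12 (_ : q1 ++ e :: q2 = (q1 ++ [:: e]) ++ q2) in hq'; last by rewrite -catA.
    have := dpath_iE (dpath_prefix hq').
    by rewrite map_cat last_cat.
case/and3P: hq => h1 h2 h3; apply/and3P; split => //.
apply/allP => e he; have := allP h2 e he; rewrite !inE => /andP[-> ->] /=.
by case/splitPr: he key => q1 q2 /(_ q1 e q2 erefl).
Qed.

Lemma shortest_le (I : inst V E) (W : {set V}) (x : rat) p v :
  edgesInV I -> (1 <= x)%R ->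
  (forall w, w \in W <-> (w \in iV I /\ dist_le c I (iroot I) w x)) ->
  shortest c (restrict I W) p (iroot I) v -> ((pcost c p)%:R <= x)%R.
Proof.
move=> hE h1 hW [hp hmin].
case: p hp hmin => [|e p] hp hmin.
  by rewrite /pcost big_nil; apply: le_trans h1; rewrite ler01.
have vW : v \in W.
  case/and3P: hp => hw /allP ha _.
  have := walk_last hw => /= hv.
  have : v \in map (ihd I) (e :: p) by rewrite -hv /=; exact: mem_last.
  case/mapP => e' he' ->; have := ha e' he'; rewrite !inE => /andP[_ /and3P[_ _ ->]].
  done.
have [_ [q [hq hqx]]] := (hW v).1 vW.
have hq2 := dpath_iE (to_restrict hE hW hq hqx).
apply: le_trans hqx; rewrite ler_nat; exact: hmin.
Qed.


Lemma walk_sub (J : inst V E) (VT C : {set V}) (FF : {set E}) p w t :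
  (forall v, v \in C -> v \notin VT) -> w \in C ->
  is_walk (itl J) (ihd J) w p t -> all (fun e => ihd J e \in C) p ->
  all (fun e => e \in FF :&: iE J) p ->
  is_walk (itl (subinst J VT C)) (ihd (subinst J VT C)) w p t &&
  all (fun e => e \in [set e in FF | (e \in iE (subinst J VT C)) && (ihd J e \in C)]
                 :&: iE (subinst J VT C)) p.
Proof.
move=> CVT; elim: p w => [|e p IH] w wC /=; first by move=> -> .
case/andP => /eqP htl hw /andP[hC aC] /andP[hF aF].
have /andP[i1 i2] := IH _ hC hw aC aF.
have eS : e \in iE (subinst J VT C).
  move: hF; rewrite !inE => /andP[_ ->] /=.
  by rewrite htl (negbTE (CVT _ wC)) (negbTE (CVT _ hC)) wC hC !orbT.
apply/and3P; split.
- rewrite htl (negbTE (CVT _ wC)) eqxx (negbTE (CVT _ hC)) /=; exact: i1.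
- rewrite in_setI; apply/andP; split; last exact: eS.
  rewrite in_set; apply/andP; split; last by apply/andP; split.
  by move: hF; rewrite in_setI => /andP[].
- exact: i2.
Qed.


Lemma sub_feas (J : inst V E) (VT C : {set V}) (F : {set E}) p t :
  edgesInV J -> iroot J \in VT -> C \in comps J VT -> t \in C ->
  dpath J F p (iroot J) t ->
  exists q, dpath (subinst J VT C)
    [set e in F | (e \in iE (subinst J VT C)) && (ihd J e \in C)] q (iroot J) t.
Proof.
move=> hE rVT hC tC hp.
set S := rest J VT.
have [u _ Cu] := imsetP hC.
have CS : forall v, v \in C -> v \in S by move=> v; rewrite Cu wcompP => /andP[].
have CVT : forall v, v \in C -> v \notin VT.
  by move=> v /CS; rewrite /S /rest inE => /andP[].
have tVT := CVT t tC.
case/and3P: hp => hw ha hu.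
have [p1 [e [p2 [hpe htl hall]]]] : exists p1 e p2,
    [/\ p = p1 ++ e :: p2, itl J e \in VT & all (fun e => ihd J e \notin VT) (e :: p2)].
  case: (split_walk hw tVT) => [hall|//].
  case: p hw ha hu hall => [|e p'] hw _ _ hall.
    by move: hw => /= /eqP ht; move: tVT; rewrite -ht rVT.
  exists [::], e, p'; split => //; by case/andP: hw => /eqP ->.
rewrite hpe in hw ha hu.
move: hw; rewrite is_walk_cat => /andP[_ /= /andP[_ hw2]].
move: ha; rewrite all_cat => /andP[_ /= /andP[heF haF]].
have inS : forall e', e' \in iE J -> ihd J e' \notin VT -> ihd J e' \in S.
  move=> e' he' hn; rewrite /S /rest inE hn /=.
  by have /andP[_ ->] := hE e' he'.
have eJ : e \in iE J by move: heF; rewrite inE => /andP[].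
have hdS : ihd J e \in S by apply: inS eJ (proj1 (andP hall)).
have aJ : all (fun e => e \in iE J) p2.
  by apply/allP => e' /(allP haF); rewrite inE => /andP[].
have aS : all (fun e => ihd J e \in S) p2.
  apply/allP => e' he'; apply: inS; first exact: (allP aJ).
  exact: (allP (proj2 (andP hall))).
have [c1 c2] := conn_walk hw2 hdS aJ aS.
have tCu : t \in wcomp J S u by rewrite -Cu.
have hdC : ihd J e \in C by rewrite Cu; exact: in_wcomp tCu hdS c1.
have aC : all (fun e => ihd J e \in C) p2.
  apply/allP => e' he'; rewrite Cu; apply: in_wcomp tCu _ _.
    exact: (allP aS).
  exact: (allP c2).
have /andP[w2 a2] := walk_sub CVT hdC hw2 aC haF.
exists (e :: p2); apply/and3P; split.
- rewrite /= htl eqxx /= (negbTE (CVT _ hdC)); exact: w2.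
- rewrite /=; apply/andP; split; last exact: a2.
  have eS : e \in iE (subinst J VT C).
    rewrite /= !inE eJ /= htl eqxx /= (negbTE (CVT _ hdC)) hdC orbT /=. done.
  rewrite in_setI eS andbT in_set; apply/andP; split; last by rewrite eS hdC.
  by move: heF; rewrite in_setI => /andP[].
- have mapq : map (ihd (subinst J VT C)) (e :: p2) = map (ihd J) (e :: p2).
    apply/eq_in_map => e' he' /=; move/allP: hall => /(_ e' he') h.
    by rewrite (negbTE h).
  rewrite /= -/(map (ihd (subinst J VT C)) p2).
  have -> : map (ihd (subinst J VT C)) p2 = map (ihd J) p2 by case: mapq.
  have -> : (if ihd J e \in VT then iroot J else ihd J e) = ihd J e.
    by rewrite (negbTE (CVT _ hdC)).
  move: hu; rewrite map_cat -cat_cons cat_uniq => /and3P[_ _ hu2].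
  move: hu2 => /andP[n1 n2]; apply/and3P; split; [| exact: n1 | exact: n2]; rewrite inE negb_or; apply/andP; split.
    by apply: (contraNneq _ (CVT _ hdC)) => <-.
  apply/mapP => -[e' he' hr]; move: (CVT _ (allP aC e' he')); rewrite -hr rVT //.
Qed.


Definition Inv (I : inst V E) :=
  [/\ iroot I \notin iterm I, iterm I != set0 & edgesInV I].

Lemma Inv_sub (I : inst V E) (W VT C : {set V}) :
  Inv I -> iroot I \in VT -> C \in comps (restrict I W) VT ->
  Inv (subinst (restrict I W) VT C).
Proof.
move=> [rX Xne hE] rVT hC; split.
- rewrite /= inE negb_and; apply/orP; left.
  have [u _ ->] := imsetP hC; rewrite wcompP /rest inE rVT //.
- exact: (comps_term hC).
- move=> e; rewrite /= in_set => /andP[_ /and3P[-> -> _]] //.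
Qed.

Lemma edges_restrict (I : inst V E) (W : {set V}) : edgesInV (restrict I W).
Proof. by move=> e; rewrite /= inE => /and3P[_ -> ->]. Qed.

Lemma feas_path (I : inst V E) (F : {set E}) t :
  feasible I F -> t \in iterm I ->
  exists p, dpath I F p (iroot I) t /\ pcost c p <= cost c F.
Proof.
move=> [_ hF] tX; have [p hp] := hF t tX; exists p; split => //.
exact: dpath_pcost hp.
Qed.

Lemma DST_cost (cpos : forall e, 0 < c e) (I : inst V E) x R n :
  DST c I x R n -> Inv I ->
  forall Fo, feasible I Fo -> ((cost c Fo)%:R <= x)%R ->
  forall l, #|iterm I| <= 2 ^ l ->
  exists F, R = Some F /\ cost c F <= (6 * l + 1) * cost c Fo.
Proof.
elim => {I x R n}.
- move=> I x hx [rX Xne hE] Fo hFo hcx l hl; exfalso.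
  case: hx => [hx|[t [tX hnd]]].
    have [t0 t0X] := set0Pn _ Xne.
    have [p [hp hpc]] := feas_path hFo t0X.
    case: p hp hpc => [|e p] hp hpc.
      by case/and3P: hp => /= /eqP ht _ _; move: rX; rewrite ht t0X.
    have : 1 <= cost c Fo.
      apply: leq_trans hpc; rewrite /pcost big_cons; apply: leq_trans (cpos e) _.
      exact: leq_addr.
    rewrite -(ler_nat rat) => h1; lra.
  have [p [hp hpc]] := feas_path hFo tX; apply: hnd; exists p; split.
    exact: dpath_iE hp.
  by apply: le_trans hcx; rewrite ler_nat.
- move=> I x t p _ _ hX [hp hmin] _ Fo hFo hcx l hl.
  exists [set e in p]; split => //.
  have tX : t \in iterm I by rewrite hX inE.
  have [q [hq hqc]] := feas_path hFo tX.
  apply: leq_trans (cost_set_le _) _; apply: leq_trans (hmin q (dpath_iE hq)) _.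
  apply: leq_trans hqc _; rewrite -[X in X <= _]mul1n leq_mul2r; apply/orP; right.
  by rewrite addn1.
- move=> I x R1 n1 W VT ET Fs ns R h1 hd hne1 hR1 IH1 hW hsep hbal _ IHs hch hI Fo hFo hcx l hl.
  have [rX Xne hE] := hI.
  set J := restrict I W.
  have [hpa [p1 [p2 [p3 [[v1 s1] [[v2 s2] [[v3 s3] [hET hVT]]]]]]]] := hsep.
  have rVT : iroot I \in VT by case: hpa => /and3P[_ _ ->].
  have F2good : (x < (2 * cost c Fo)%:R)%R -> exists F2,
      combine ET (comps J VT) Fs = Some F2 /\ cost c F2 <= (6 * l + 1) * cost c Fo.
    move=> hlt.
    have X2 : 2 <= #|iterm I|.
      by move: hne1 Xne; rewrite -card_gt0; case: #|iterm I| => [|[|k]].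
    case: l hl => [|l'] hl; first by move: (leq_trans X2 hl).
    set FoC := fun C => [set e in Fo | (e \in iE (subinst J VT C)) && (ihd J e \in C)].
    have hC : forall C, C \in comps J VT -> Fs C != None /\
        cost c (odflt set0 (Fs C)) <= (6 * l' + 1) * cost c (FoC C).
      move=> C hC.
      have hIs := Inv_sub hI rVT hC.
      have hFoC : feasible (subinst J VT C) (FoC C).
        split; first by apply/subsetP => e; rewrite inE => /andP[_ /andP[]].
        move=> t; rewrite /= inE => /andP[tC tX].
        have [p [hp hpc]] := feas_path hFo tX.
        have hpx : ((pcost c p)%:R <= x)%R by apply: le_trans hcx; rewrite ler_nat.
        have hpJ := to_restrict hE hW hp hpx.
        have [q hq] := sub_feas (@edges_restrict I W) rVT hC tC hpJ.
        exists q; exact: hq.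
      have hcC : ((cost c (FoC C))%:R <= x)%R.
        apply: le_trans hcx; rewrite ler_nat; apply: cost_sub.
        by apply/subsetP => e; rewrite inE => /andP[].
      have hlC : #|iterm (subinst J VT C)| <= 2 ^ l'.
        have [u hu Cu] := imsetP hC.
        move: hu; rewrite inE => /andP[hur _]; have := hbal u hur.
        rewrite /= -Cu -mul2n; move: hl; rewrite expnS /=; lia.
      have [FC [-> hFC]] := IHs C hC hIs (FoC C) hFoC hcC l' hlC.
      by split.
    have hcomb : [forall C in comps J VT, Fs C != None].
      by apply/forallP => C; apply/implyP => /hC [].
    rewrite /combine hcomb; eexists; split; first reflexivity.
    apply: leq_trans (cost_setU _ _) _.
    apply: leq_trans (leq_add (leqnn _) (cost_bigcup (comps J VT) (fun C => odflt set0 (Fs C)))) _.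
    have hsum : \sum_(C in comps J VT) cost c (odflt set0 (Fs C)) <= (6 * l' + 1) * cost c Fo.
      apply: (@leq_trans (\sum_(C in comps J VT) (6 * l' + 1) * cost c (FoC C))).
        by apply: leq_sum => C /hC [].
      rewrite -big_distrr /= leq_mul2l; apply/orP; right.
      apply: leq_trans (@sum_disj E V (comps J VT) (ihd J) c Fo _); last first.
        by move=> C1 C2 v h1' h2' h3 h4; exact: comps_disj h1' h2' h3 h4.
      apply: leq_sum => C _; rewrite /cost.
      have -> : \sum_(x0 in Fo | ihd J x0 \in C) c x0 = cost c [set e in Fo | ihd J e \in C].
        by rewrite /cost; apply: eq_bigl => e; rewrite inE.
      apply: cost_sub; apply/subsetP => e; rewrite !inE => /andP[-> /andP[_ ->]] //.
    have hETc : cost c ET < 6 * cost c Fo.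
      have hs : forall p v, shortest c J p (iroot I) v -> ((pcost c p)%:R <= x)%R.
        by move=> p v hsp; exact: (shortest_le hE h1 hW hsp).
      have h3 : ((cost c ET)%:R <= 3%:R * x)%R.
        rewrite hET; apply: (@le_trans _ _ ((pcost c (p1 ++ p2 ++ p3))%:R : rat)).
          by rewrite ler_nat; exact: cost_set_le.
        rewrite !pcost_cat !natrD.
        have := hs _ _ s1; have := hs _ _ s2; have := hs _ _ s3; lra.
      rewrite -(ltr_nat rat) natrM; move: hlt; rewrite natrM; lra.
    move: hETc hsum; lia.
  case: (boolP ((2 * cost c Fo)%:R <= x)%R) => hA.
    have hcx2 : ((cost c Fo)%:R <= x / 2)%R by move: hA; rewrite natrM; lra.
    have [F1 [hR1e hF1]] := IH1 hI Fo hFo hcx2 l hl.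
    move: hch; rewrite hR1e.
    case: (combine ET (comps J VT) Fs) => [F2|] /=.
      case=> -[-> hle].
        by exists F1.
      by exists F2; split => //; exact: leq_trans hle hF1.
    by move=> ->; exists F1.
  have [F2 [hc2 hF2]] := F2good (ltac:(rewrite ltNge; exact: hA)).
  move: hch; rewrite hc2.
  case: R1 {IH1 hR1} => [F1|] /=.
    case=> -[-> hle].
      by exists F1; split => //; exact: leq_trans hle hF2.
    by exists F2.
  by move=> ->; exists F2.
Qed.

End Gen.

Theorem lemma3 (V E : finType) (tl hd : E -> V) (c : E -> nat) (r : V)
    (X : {set V}) (l o optv : nat) (optt : rat) :
  (forall e, 0 < c e) ->
  r \notin X ->
  X != set0 ->
  #|X| <= 2 ^ l ->
  (optt <= 2%:R ^+ o)%R ->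
  is_opt c (Inst [set: V] [set: E] tl hd r X) optv ->
  (optv%:R <= optt)%R ->
  forall res n, DST c (Inst [set: V] [set: E] tl hd r X) optt res n ->
  exists F, [/\ res = Some F,
    feasible (Inst [set: V] [set: E] tl hd r X) F,
    cost c F <= (6 * l + 1) * optv &
    n <= #|X| * 2 ^ (2 * l + o)].
Proof.
move=> cpos rX Xne hl ho [[Fo [hFo hcFo]] _] hopt res n hD.
have hI : Inv (Inst [set: V] [set: E] tl hd r X).
  by split => // e _; rewrite /= !inE.
have [F [hres hF]] := DST_cost cpos hD hI hFo (ltac:(by rewrite hcFo)) hl.
exists F; split => //.
- exact: (DST_feas hD (subsetT _) hres).
- by rewrite -hcFo.
- exact: (DST_count hD Xne hl ho).
Qed.
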